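(* Let $D:\mathbb R^2\setminus\{0\}\to\mathbb R$ be nonnegative, bounded and continuously differentiable, and consider $\ddot x+D(x)\dot x=-x/|x|^3$. Let $T,r_A,r_B>0$ and let $x_n:[-T,0]\to\mathbb R^2\setminus\{0\}$ be solutions with $|x_n(-T)|=r_A$ and $|x_n(0)|=r_B$ such that $\{\dot r_n(0)\}$ is bounded, where $r_n=|x_n|$. Then $\{c_n(0)\}$ is bounded, where $c_n=\det(x_n,\dot x_n)$. *)

(* Defs.v *)
From Stdlib Require Import Reals.
Open Scope R_scope.

Definition norm2 (x y : R) : R := sqrt (x ^ 2 + y ^ 2).

Definition deriv_within (a b : R) (f : R -> R) (d t : R) : Prop :=
  forall eps, 0 < eps -> exists delta, 0 < delta /\
    forall s, a <= s <= b -> 0 < Rabs (s - t) < delta ->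
      Rabs ((f s - f t) / (s - t) - d) < eps.

Definition cont2 (g : R -> R -> R) (x y : R) : Prop :=
  forall eps, 0 < eps -> exists delta, 0 < delta /\
    forall u w, Rabs (u - x) < delta -> Rabs (w - y) < delta ->
      Rabs (g u w - g x y) < eps.

Definition C1_punctured (D : R -> R -> R) : Prop :=
  exists D1 D2 : R -> R -> R,
    forall x y, (x, y) <> (0, 0) ->
      derivable_pt_lim (fun u => D u y) x (D1 x y) /\
      derivable_pt_lim (fun w => D x w) y (D2 x y) /\
      cont2 D1 x y /\ cont2 D2 x y.

Definition is_solution (D : R -> R -> R) (T : R)
    (x1 x2 v1 v2 : R -> R) : Prop :=
  forall t, -T <= t <= 0 ->
    (x1 t, x2 t) <> (0, 0) /\
    deriv_within (-T) 0 x1 (v1 t) t /\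
    deriv_within (-T) 0 x2 (v2 t) t /\
    deriv_within (-T) 0 v1
      (- D (x1 t) (x2 t) * v1 t - x1 t / (norm2 (x1 t) (x2 t)) ^ 3) t /\
    deriv_within (-T) 0 v2
      (- D (x1 t) (x2 t) * v2 t - x2 t / (norm2 (x1 t) (x2 t)) ^ 3) t.

(* Main.v *)
Require Import Defs.
From Stdlib Require Import Reals Lra.
From Coquelicot Require Import Coquelicot.
Open Scope R_scope.

Lemma Dplus f g x a b : derivable_pt_lim f x a -> derivable_pt_lim g x b ->
  derivable_pt_lim (fun t => f t + g t) x (a + b).
Proof. intros H1 H2; exact (derivable_pt_lim_plus f g x a b H1 H2). Qed.
Lemma Dminus f g x a b : derivable_pt_lim f x a -> derivable_pt_lim g x b ->
  derivable_pt_lim (fun t => f t - g t) x (a - b).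
Proof. intros H1 H2; exact (derivable_pt_lim_minus f g x a b H1 H2). Qed.
Lemma Dmult f g x a b : derivable_pt_lim f x a -> derivable_pt_lim g x b ->
  derivable_pt_lim (fun t => f t * g t) x (a * g x + f x * b).
Proof. intros H1 H2; exact (derivable_pt_lim_mult f g x a b H1 H2). Qed.
Lemma Dconst c x : derivable_pt_lim (fun _ => c) x 0.
Proof. exact (derivable_pt_lim_const c x). Qed.
Lemma Did x : derivable_pt_lim (fun t => t) x 1.
Proof. exact (derivable_pt_lim_id x). Qed.
Lemma Dsqrt f x a : derivable_pt_lim f x a -> 0 < f x ->
  derivable_pt_lim (fun t => sqrt (f t)) x (a / (2 * sqrt (f x))).
Proof.
  intros H1 H2.
  replace (a / (2 * sqrt (f x))) with (/ (2 * sqrt (f x)) * a) by (unfold Rdiv; ring).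
  exact (derivable_pt_lim_comp f sqrt x a _ H1 (derivable_pt_lim_sqrt _ H2)).
Qed.
Lemma Dinv f x a : derivable_pt_lim f x a -> f x <> 0 ->
  derivable_pt_lim (fun t => / f t) x (- a / (f x) ^ 2).
Proof.
  intros H1 H2. apply is_derive_Reals. apply is_derive_inv; auto.
  apply is_derive_Reals; auto.
Qed.
Lemma Dval f x a b : derivable_pt_lim f x a -> a = b -> derivable_pt_lim f x b.
Proof. intros H ->; exact H. Qed.

Lemma L_local f t l : derivable_pt_lim f t l -> forall eps, 0 < eps ->
  exists delta, 0 < delta /\ forall s, Rabs (s - t) < delta ->
    Rabs (f s - f t - l * (s - t)) <= eps * Rabs (s - t).
Proof.
  intros H eps he. destruct (H eps he) as [[d dp] Hd]. exists d; split; auto.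
  intros s Hs. destruct (Req_dec s t) as [->|hne].
  - replace (f t - f t - l * (t - t)) with 0 by ring. rewrite Rminus_diag, Rabs_R0. lra.
  - assert (hh : s - t <> 0) by lra.
    specialize (Hd (s - t) hh Hs). simpl in Hd. replace (t + (s - t)) with s in Hd by ring.
    replace (f s - f t - l * (s - t)) with (((f s - f t) / (s - t) - l) * (s - t))
      by (field; auto).
    rewrite Rabs_mult. apply Rmult_le_compat_r. apply Rabs_pos. lra.
Qed.

Lemma W_local a b f t l : a <= t <= b -> deriv_within a b f l t -> forall eps, 0 < eps ->
  exists delta, 0 < delta /\ forall s, a <= s <= b -> Rabs (s - t) < delta ->
    Rabs (f s - f t - l * (s - t)) <= eps * Rabs (s - t).
Proof.
  intros ht H eps he. destruct (H eps he) as [d [dp Hd]]. exists d; split; auto.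
  intros s hs Hs. destruct (Req_dec s t) as [->|hne].
  - replace (f t - f t - l * (t - t)) with 0 by ring. rewrite Rminus_diag, Rabs_R0. lra.
  - assert (hh : s - t <> 0) by lra.
    assert (hp : 0 < Rabs (s - t)) by (apply Rabs_pos_lt; auto).
    specialize (Hd s hs (conj hp Hs)).
    replace (f s - f t - l * (s - t)) with (((f s - f t) / (s - t) - l) * (s - t))
      by (field; auto).
    rewrite Rabs_mult. apply Rmult_le_compat_r. apply Rabs_pos. lra.
Qed.

Lemma from_local g t l :
  (forall eps, 0 < eps -> exists delta, 0 < delta /\ forall s, Rabs (s - t) < delta ->
    Rabs (g s - g t - l * (s - t)) <= eps * Rabs (s - t)) -> derivable_pt_lim g t l.
Proof.
  intros H eps he. destruct (H (eps/2)) as [d [dp Hd]]; [lra|].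
  exists (mkposreal d dp). intros h hn hl. simpl in hl.
  specialize (Hd (t + h)). replace (t + h - t) with h in Hd by ring.
  specialize (Hd hl).
  replace ((g (t + h) - g t) / h - l) with ((g (t + h) - g t - l * h) / h) by (field; auto).
  unfold Rdiv. rewrite Rabs_mult, Rabs_inv.
  assert (hp : 0 < Rabs h) by (apply Rabs_pos_lt; auto).
  apply Rle_lt_trans with (eps / 2 * Rabs h * / Rabs h).
  apply Rmult_le_compat_r; [left; apply Rinv_0_lt_compat; auto| auto].
  field_simplify; lra.
Qed.

Lemma ext a b f df : a < b -> (forall t, a <= t <= b -> deriv_within a b f (df t) t) ->
  exists g, (forall t, a <= t <= b -> g t = f t) /\
            (forall t, a <= t <= b -> derivable_pt_lim g t (df t)).
Proof.
  intros hab H.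
  set (g := fun s => if Rlt_dec s a then f a + df a * (s - a)
                     else if Rlt_dec b s then f b + df b * (s - b) else f s).
  assert (geq : forall t, a <= t <= b -> g t = f t).
  { intros t ht; unfold g; destruct (Rlt_dec t a); [lra|]; destruct (Rlt_dec b t); [lra|]; auto. }
  exists g; split; auto.
  intros t ht. apply from_local. intros eps he.
  destruct (W_local a b f t (df t) ht (H t ht) eps he) as [d0 [d0p H0]].
  assert (hda : exists da, 0 < da /\ (a < t -> da <= t - a)).
  { destruct (Rlt_dec a t). exists (t - a); split; lra. exists 1; split; lra. }
  assert (hdb : exists db, 0 < db /\ (t < b -> db <= b - t)).
  { destruct (Rlt_dec t b). exists (b - t); split; lra. exists 1; split; lra. }
  destruct hda as [da [dap Hda]]; destruct hdb as [db [dbp Hdb]].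
  exists (Rmin d0 (Rmin da db)); split.
  { apply Rmin_pos; auto; apply Rmin_pos; auto. }
  intros s Hs.
  assert (h1 : Rabs (s - t) < d0) by (eapply Rlt_le_trans; [exact Hs| apply Rmin_l]).
  assert (h2 : Rabs (s - t) < da) by (eapply Rlt_le_trans; [exact Hs| eapply Rle_trans; [apply Rmin_r| apply Rmin_l]]).
  assert (h3 : Rabs (s - t) < db) by (eapply Rlt_le_trans; [exact Hs| eapply Rle_trans; [apply Rmin_r| apply Rmin_r]]).
  rewrite (geq t ht).
  assert (Hab := Rabs_pos (s - t)).
  unfold g. destruct (Rlt_dec s a).
  - destruct (Rlt_dec a t).
    + specialize (Hda r0). apply Rabs_def2 in h2. lra.
    + assert (t = a) by lra. subst t.
      replace (f a + df a * (s - a) - f a - df a * (s - a)) with 0 by ring.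
      rewrite Rabs_R0. apply Rmult_le_pos; lra.
  - destruct (Rlt_dec b s).
    + destruct (Rlt_dec t b).
      * specialize (Hdb r0). apply Rabs_def2 in h3. lra.
      * assert (t = b) by lra. subst t.
        replace (f b + df b * (s - b) - f b - df b * (s - b)) with 0 by ring.
        rewrite Rabs_R0. apply Rmult_le_pos; lra.
    + apply H0; auto; lra.
Qed.

Lemma mono h dh a b : (forall s, a <= s <= b -> derivable_pt_lim h s (dh s)) ->
  (forall s, a <= s <= b -> 0 <= dh s) -> forall u w, a <= u -> u <= w -> w <= b -> h u <= h w.
Proof.
  intros H Hp u w hu huw hw. destruct (Req_dec u w) as [->|hne]; [lra|].
  destruct (MVT_cor2 h dh u w) as [c [Hc Hc2]]; [lra| |].
  { intros c hc; apply H; lra. }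
  assert (0 <= dh c) by (apply Hp; lra).
  assert (0 <= dh c * (w - u)) by (apply Rmult_le_pos; lra). lra.
Qed.

Lemma cont_local f t l : derivable_pt_lim f t l -> forall eps, 0 < eps ->
  exists delta, 0 < delta /\ forall s, Rabs (s - t) < delta -> Rabs (f s - f t) < eps.
Proof.
  intros H eps he. destruct (L_local f t l H 1 Rlt_0_1) as [d [dp Hd]].
  exists (Rmin d (eps / (Rabs l + 2))); split.
  { apply Rmin_pos; auto. apply Rdiv_lt_0_compat; auto. assert (0 <= Rabs l) by apply Rabs_pos; lra. }
  intros s Hs.
  assert (h1 : Rabs (s - t) < d) by (eapply Rlt_le_trans; [exact Hs| apply Rmin_l]).
  assert (h2 : Rabs (s - t) < eps / (Rabs l + 2)) by (eapply Rlt_le_trans; [exact Hs| apply Rmin_r]).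
  specialize (Hd s h1).
  assert (hl : 0 <= Rabs l) by apply Rabs_pos.
  assert (Rabs (f s - f t) <= Rabs (f s - f t - l * (s - t)) + Rabs (l * (s - t))).
  { replace (f s - f t) with ((f s - f t - l * (s - t)) + l * (s - t)) at 1 by ring. apply Rabs_triang. }
  rewrite Rabs_mult in H0.
  assert (hx : Rabs (s - t) * (Rabs l + 2) < eps).
  { apply Rmult_lt_reg_r with (/ (Rabs l + 2)). apply Rinv_0_lt_compat; lra.
    rewrite Rmult_assoc, Rinv_r by lra. rewrite Rmult_1_r. exact h2. }
  assert (Rabs l * Rabs (s - t) <= Rabs l * Rabs (s-t)) by lra.
  nra.
Qed.

Lemma barrier f d a b L : a <= b -> (forall s, a <= s <= b -> derivable_pt_lim f s (d s)) ->
  f b <= L -> (forall s, a <= s <= b -> f s = L -> 0 < d s) ->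
  forall t, a <= t <= b -> f t <= L.
Proof.
  intros hab H hb hL t0 ht0. destruct (Rle_dec (f t0) L) as [ok|hbad]; auto.
  exfalso. apply Rnot_le_lt in hbad.
  set (E := fun s => t0 <= s <= b /\ forall u, t0 <= u <= s -> f u > L).
  assert (Eb : bound E). { exists b. intros s [hs _]. lra. }
  assert (Ene : exists x, E x). { exists t0. split. lra. intros u hu. replace u with t0 by lra. lra. }
  destruct (completeness E Eb Ene) as [sg [Hub Hlub]].
  assert (ht0s : t0 <= sg). { apply Hub. destruct Ene. split. lra. intros u hu; replace u with t0 by lra; lra. }
  assert (hsb : sg <= b). { apply Hlub. intros s [hs _]; lra. }
  assert (P : forall u, t0 <= u < sg -> f u > L).
  { intros u hu. destruct (Rlt_dec L (f u)) as [ok|nok]; [lra|].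
    assert (sg <= u); [|lra]. apply Hlub. intros s [hs Hs].
    destruct (Rle_dec s u) as [ok|nk]; auto. exfalso. apply nok. apply Hs. lra. }
  assert (hsab : a <= sg <= b) by lra.
  destruct (Rlt_dec L (f sg)) as [hgt|hle].
  - assert (hsb' : sg < b). { destruct (Req_dec sg b) as [->|]; lra. }
    destruct (cont_local f sg (d sg) (H sg hsab) (f sg - L)) as [dl [dlp Hdl]]; [lra|].
    set (s1 := Rmin (sg + dl / 2) b).
    assert (s1 <= sg); [|unfold s1, Rmin in H0; destruct Rle_dec in H0; lra].
    apply Hub. split. unfold s1; unfold Rmin; destruct Rle_dec; lra.
    intros u hu. destruct (Rlt_dec u sg) as [hl|hge]. apply P; lra.
    assert (Rabs (u - sg) < dl).
    { apply Rabs_def1; unfold s1, Rmin in hu; destruct Rle_dec in hu; lra. }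
    specialize (Hdl u H0). apply Rabs_def2 in Hdl. lra.
  - assert (ht0sg : t0 < sg). { destruct (Req_dec t0 sg) as [<-|]; lra. }
    destruct (Req_dec (f sg) L) as [heq|hne].
    + assert (hd : 0 < d sg) by (apply hL; auto).
      destruct (L_local f sg (d sg) (H sg hsab) (d sg / 2)) as [dl [dlp Hdl]]; [lra|].
      set (u := Rmax (sg - dl / 2) t0).
      assert (hu1 : t0 <= u < sg) by (unfold u, Rmax; destruct Rle_dec; lra).
      assert (hu2 : sg - u <= dl / 2) by (unfold u, Rmax; destruct Rle_dec; lra).
      assert (hr : Rabs (u - sg) = sg - u) by (rewrite Rabs_left; lra).
      specialize (Hdl u). rewrite hr in Hdl. specialize (Hdl ltac:(lra)).
      pose proof (Rle_abs (f u - f sg - d sg * (u - sg))) as ha. specialize (P u hu1). nra.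
    + destruct (cont_local f sg (d sg) (H sg hsab) (L - f sg)) as [dl [dlp Hdl]]; [lra|].
      set (u := Rmax (sg - dl / 2) t0).
      assert (hu1 : t0 <= u < sg) by (unfold u, Rmax; destruct Rle_dec; lra).
      assert (hu2 : sg - u <= dl / 2) by (unfold u, Rmax; destruct Rle_dec; lra).
      assert (hr : Rabs (u - sg) = sg - u) by (rewrite Rabs_left; lra).
      specialize (Hdl u). rewrite hr in Hdl. specialize (Hdl ltac:(lra)).
      apply Rabs_def2 in Hdl. specialize (P u hu1). lra.
Qed.

Lemma uniq_b a b f g d l : a < b -> (forall t, a <= t <= b -> g t = f t) ->
  deriv_within a b f d b -> derivable_pt_lim g b l -> d = l.
Proof.
  intros hab heq Hw Hg. destruct (Req_dec d l) as [ok|hne]; auto. exfalso.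
  assert (he : 0 < Rabs (d - l) / 2) by (apply Rdiv_lt_0_compat; [apply Rabs_pos_lt; lra| lra]).
  destruct (Hw _ he) as [d1 [d1p H1]].
  destruct (Hg _ he) as [[d2 d2p] H2]. simpl in H2.
  set (h := Rmin (Rmin d1 d2) (b - a) / 2).
  assert (hp : 0 < h). { unfold h. apply Rdiv_lt_0_compat; [|lra]. repeat apply Rmin_pos; lra. }
  assert (hm : Rmin (Rmin d1 d2) (b - a) <= d1 /\ Rmin (Rmin d1 d2) (b - a) <= d2 /\ Rmin (Rmin d1 d2) (b - a) <= b - a).
  { repeat split. eapply Rle_trans; [apply Rmin_l|apply Rmin_l]. eapply Rle_trans; [apply Rmin_l|apply Rmin_r]. apply Rmin_r. }
  assert (hh1 : h < d1 /\ h < d2 /\ h <= (b - a) / 2) by (unfold h; lra).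
  clearbody h.
  assert (hr : Rabs (- h) = h) by (rewrite Rabs_Ropp, Rabs_right; lra).
  specialize (H2 (- h) ltac:(intro; lra) ltac:(rewrite hr; lra)).
  specialize (H1 (b - h) ltac:(lra)).
  replace (b - h - b) with (- h) in H1 by ring. rewrite hr in H1.
  specialize (H1 ltac:(lra)).
  replace (b + - h) with (b - h) in H2 by ring.
  rewrite (heq b) in H2 by lra. rewrite (heq (b - h)) in H2 by lra.
  assert (Rabs (d - l) <= Rabs ((f (b - h) - f b) / - h - d) + Rabs ((f (b - h) - f b) / - h - l)).
  { replace (d - l) with (- ((f (b - h) - f b) / - h - d) + ((f (b - h) - f b) / - h - l)) by ring.
    eapply Rle_trans. apply Rabs_triang. rewrite Rabs_Ropp. lra. }
  lra.
Qed.

Lemma Dopp f x a : derivable_pt_lim f x a -> derivable_pt_lim (fun t => - f t) x (- a).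
Proof. intros H; exact (derivable_pt_lim_opp f x a H). Qed.

Lemma antimono h dh a b : (forall s, a <= s <= b -> derivable_pt_lim h s (dh s)) ->
  (forall s, a <= s <= b -> dh s <= 0) -> forall u w, a <= u -> u <= w -> w <= b -> h w <= h u.
Proof.
  intros H Hp u w hu huw hw.
  assert (- h u <= - h w); [|lra].
  apply (mono (fun t => - h t) (fun t => - dh t) a b); auto.
  intros s hs; apply Dopp; auto. intros s hs; specialize (Hp s hs); lra.
Qed.

Lemma sum_sq_pos x y : (x, y) <> (0, 0) -> 0 < x ^ 2 + y ^ 2.
Proof.
  intros H. destruct (Req_dec x 0) as [->|hx].
  - destruct (Req_dec y 0) as [->|hy]. exfalso; apply H; auto.
    assert (0 < y * y) by (apply Rsqr_pos_lt; auto). simpl; nra.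
  - assert (0 < x * x) by (apply Rsqr_pos_lt; auto). simpl; nra.
Qed.

Lemma per_n D B m T rA rB (x1 x2 v1 v2 : R -> R) d :
  0 < T -> 0 <= B -> 0 <= m -> 0 < rB ->
  (forall x y, (x, y) <> (0, 0) -> 0 <= D x y <= B) ->
  is_solution D T x1 x2 v1 v2 ->
  norm2 (x1 (-T)) (x2 (-T)) = rA -> norm2 (x1 0) (x2 0) = rB ->
  deriv_within (-T) 0 (fun t => norm2 (x1 t) (x2 t)) d 0 -> rB * d <= m ->
  (x1 0 * v2 0 - x2 0 * v1 0) ^ 2 <= rB ^ 2 * (B * m + (rA ^ 2 + 2 * m * T) / T ^ 2 + 2 / rB).
Proof.
  intros hT hB hm hrB hD hsol hA hB0 hd hdm.
  assert (hab : -T < 0) by lra.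
  destruct (ext (-T) 0 x1 v1 hab) as [X1 [eX1 dX1]]. { intros t ht; apply (hsol t ht). }
  destruct (ext (-T) 0 x2 v2 hab) as [X2 [eX2 dX2]]. { intros t ht; apply (hsol t ht). }
  destruct (ext (-T) 0 v1 (fun t => - D (x1 t) (x2 t) * v1 t - x1 t / (norm2 (x1 t) (x2 t)) ^ 3) hab)
    as [V1 [eV1 dV1]]. { intros t ht; apply (hsol t ht). }
  destruct (ext (-T) 0 v2 (fun t => - D (x1 t) (x2 t) * v2 t - x2 t / (norm2 (x1 t) (x2 t)) ^ 3) hab)
    as [V2 [eV2 dV2]]. { intros t ht; apply (hsol t ht). }
  set (I := fun t => -T <= t <= 0) in *.
  assert (hP : forall t, -T <= t <= 0 -> 0 < x1 t ^ 2 + x2 t ^ 2).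
  { intros t ht; apply sum_sq_pos, (hsol t ht). }
  assert (hN : forall t, -T <= t <= 0 -> 0 < norm2 (x1 t) (x2 t)).
  { intros t ht; unfold norm2; apply sqrt_lt_R0, hP; auto. }
  assert (hN2 : forall t, -T <= t <= 0 -> norm2 (x1 t) (x2 t) ^ 2 = x1 t ^ 2 + x2 t ^ 2).
  { intros t ht; unfold norm2. rewrite pow2_sqrt; [ring|]. left; apply hP; auto. }
  assert (hDv : forall t, -T <= t <= 0 -> 0 <= D (x1 t) (x2 t) <= B).
  { intros t ht; apply hD, (hsol t ht). }
  set (S := fun t => X1 t * X1 t + X2 t * X2 t).
  assert (eS : forall t, -T <= t <= 0 -> S t = x1 t ^ 2 + x2 t ^ 2).
  { intros t ht; unfold S; rewrite eX1, eX2 by auto; ring. }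
  assert (esq : forall t, -T <= t <= 0 -> sqrt (S t) = norm2 (x1 t) (x2 t)).
  { intros t ht; rewrite eS by auto; reflexivity. }
  assert (dS : forall t, -T <= t <= 0 -> derivable_pt_lim S t (2 * (x1 t * v1 t + x2 t * v2 t))).
  { intros t ht. eapply Dval. apply Dplus; [apply (Dmult X1 X1)|apply (Dmult X2 X2)]; auto.
    rewrite eX1, eX2 by auto. ring. }
  set (Y := fun t => X1 t * V1 t + X2 t * V2 t).
  assert (eY : forall t, -T <= t <= 0 -> Y t = x1 t * v1 t + x2 t * v2 t).
  { intros t ht; unfold Y; rewrite eX1, eX2, eV1, eV2 by auto; ring. }
  assert (dY : forall t, -T <= t <= 0 -> derivable_pt_lim Y t
     (v1 t ^ 2 + v2 t ^ 2 - D (x1 t) (x2 t) * Y t - / norm2 (x1 t) (x2 t))).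
  { intros t ht. eapply Dval. apply Dplus; [apply (Dmult X1 V1)|apply (Dmult X2 V2)]; auto.
    rewrite eY by auto. rewrite eX1, eX2, eV1, eV2 by auto.
    assert (hn := hN t ht). assert (hn2 := hN2 t ht).
    set (N := norm2 (x1 t) (x2 t)) in *.
    replace (/ N) with ((x1 t ^ 2 + x2 t ^ 2) / N ^ 3).
    field. lra. rewrite <- hn2. field. lra. }
  set (E := fun t => V1 t * V1 t + V2 t * V2 t - 2 * / sqrt (S t)).
  assert (eE : forall t, -T <= t <= 0 -> E t = v1 t ^ 2 + v2 t ^ 2 - 2 / norm2 (x1 t) (x2 t)).
  { intros t ht; unfold E; rewrite esq, eV1, eV2 by auto. unfold Rdiv; ring. }
  assert (dE : forall t, -T <= t <= 0 -> derivable_pt_lim E t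
     (- 2 * D (x1 t) (x2 t) * (v1 t ^ 2 + v2 t ^ 2))).
  { intros t ht. eapply Dval. apply Dminus. apply Dplus; [apply (Dmult V1 V1)|apply (Dmult V2 V2)]; auto.
    apply (Dmult (fun _ => 2) (fun t => / sqrt (S t))). apply Dconst. apply Dinv. apply Dsqrt. apply dS; auto.
    rewrite eS by auto; apply hP; auto.
    rewrite esq by auto. assert (hn := hN t ht); lra.
    cbv beta. rewrite esq by auto. rewrite eV1, eV2 by auto.
    assert (hn := hN t ht). set (N := norm2 (x1 t) (x2 t)) in *. field. lra. }
  set (K := E 0).
  assert (h0 : -T <= 0 <= 0) by lra.
  assert (hEK : forall t, -T <= t <= 0 -> K <= E t).
  { intros t ht. unfold K. apply (antimono E _ (-T) 0 dE); try lra.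
    intros s hs. assert (hd2 := hDv s hs). assert (0 <= v1 s ^ 2 + v2 s ^ 2) by (simpl; nra). nra. }
  assert (hY0 : Y 0 <= m).
  { set (R1 := fun t => sqrt (S t)).
    assert (dR : derivable_pt_lim R1 0 (Y 0 / rB)).
    { eapply Dval. apply Dsqrt. apply dS; auto. rewrite eS by auto; apply hP; auto.
      rewrite esq, eY, hB0 by auto. field. lra. }
    assert (heq : d = Y 0 / rB).
    { apply (uniq_b (-T) 0 (fun t => norm2 (x1 t) (x2 t)) R1); auto. }

    rewrite heq in hdm. replace (rB * (Y 0 / rB)) with (Y 0) in hdm by (field; lra). lra. }
  assert (hKb : K <= B * m + (rA ^ 2 + 2 * m * T) / T ^ 2).
  { destruct (Rle_dec K (B * m)) as [hle|hgt].
    { assert (0 <= (rA ^ 2 + 2 * m * T) / T ^ 2).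
      { unfold Rdiv; apply Rmult_le_pos; [|left; apply Rinv_0_lt_compat; simpl; nra]. assert (0 <= rA ^ 2) by (simpl; nra). nra. }
      lra. }
    apply Rnot_le_lt in hgt.
    assert (hYm : forall t, -T <= t <= 0 -> Y t <= m).
    { apply (barrier Y (fun t => v1 t ^ 2 + v2 t ^ 2 - D (x1 t) (x2 t) * Y t - / norm2 (x1 t) (x2 t)) (-T) 0 m); try lra; auto.
      intros s hs hys. assert (hd2 := hDv s hs). assert (hn := hN s hs).
      assert (0 < / norm2 (x1 s) (x2 s)) by (apply Rinv_0_lt_compat; auto).
      specialize (hEK s hs). rewrite eE in hEK by auto. rewrite hys.
      unfold Rdiv in hEK. nra. }
    set (c := K - B * m).
    assert (hYc : forall t, -T <= t <= 0 -> Y t - c * t <= m).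
    { intros t ht.
      assert (Y t - c * t <= Y 0 - c * 0); [|lra].
      apply (mono (fun t => Y t - c * t) (fun t => (v1 t ^ 2 + v2 t ^ 2 - D (x1 t) (x2 t) * Y t - / norm2 (x1 t) (x2 t)) - (0 * t + c * 1)) (-T) 0); try lra.
      intros s hs. apply Dminus. apply dY; auto. apply Dmult. apply Dconst. apply Did.
      intros s hs. assert (hd2 := hDv s hs). assert (hn := hN s hs).
      specialize (hEK s hs). rewrite eE in hEK by auto. specialize (hYm s hs).
      assert (0 < / norm2 (x1 s) (x2 s)) by (apply Rinv_0_lt_compat; auto).
      unfold Rdiv in hEK. unfold c. nra. }
    assert (hS : S 0 - 2 * m * 0 - c * (0 * 0) <= S (-T) - 2 * m * (-T) - c * ((-T) * (-T))).
    { apply (antimono (fun t => S t - 2 * m * t - c * (t * t))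
        (fun t => 2 * (x1 t * v1 t + x2 t * v2 t) - (0 * t + 2 * m * 1) - (0 * (t * t) + c * (1 * t + t * 1))) (-T) 0); try lra.
      intros s hs. apply Dminus. apply Dminus. apply dS; auto.
      apply (Dmult (fun _ => 2 * m) (fun t => t)). apply Dconst. apply Did. apply (Dmult (fun _ => c) (fun t => t * t)). apply Dconst. apply (Dmult (fun t => t) (fun t => t)); apply Did.
      intros s hs. specialize (hYc s hs). rewrite eY in hYc by auto. lra. }
    rewrite (eS 0), (eS (-T)) in hS by lra.
    assert (hA2 : x1 (-T) ^ 2 + x2 (-T) ^ 2 = rA ^ 2).
    { rewrite <- hN2 by lra. rewrite hA; auto. }
    rewrite hA2 in hS.
    assert (0 <= x1 0 ^ 2 + x2 0 ^ 2) by (simpl; nra).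
    assert (c * T ^ 2 <= rA ^ 2 + 2 * m * T) by (simpl; nra).
    assert (c <= (rA ^ 2 + 2 * m * T) / T ^ 2).
    { apply Rmult_le_reg_r with (T ^ 2). simpl; nra.
      unfold Rdiv. rewrite Rmult_assoc, Rinv_l by (simpl; nra). lra. }
    unfold c in *; lra. }
  assert (hK0 : K = v1 0 ^ 2 + v2 0 ^ 2 - 2 / rB) by (unfold K; rewrite eE, hB0 by lra; auto).
  assert (hr2 : x1 0 ^ 2 + x2 0 ^ 2 = rB ^ 2) by (rewrite <- hN2, hB0 by lra; auto).
  assert (hid : (x1 0 * v2 0 - x2 0 * v1 0) ^ 2 + (x1 0 * v1 0 + x2 0 * v2 0) ^ 2
     = (x1 0 ^ 2 + x2 0 ^ 2) * (v1 0 ^ 2 + v2 0 ^ 2)) by ring.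
  rewrite hr2 in hid.
  assert (v1 0 ^ 2 + v2 0 ^ 2 <= B * m + (rA ^ 2 + 2 * m * T) / T ^ 2 + 2 / rB) by lra.
  assert (0 <= (x1 0 * v1 0 + x2 0 * v2 0) ^ 2) by apply pow2_ge_0.
  assert (0 <= rB ^ 2) by apply pow2_ge_0.
  assert (rB ^ 2 * (v1 0 ^ 2 + v2 0 ^ 2) <= rB ^ 2 * (B * m + (rA ^ 2 + 2 * m * T) / T ^ 2 + 2 / rB)).
  { apply Rmult_le_compat_l; auto. }
  lra.
Qed.

Theorem lemma7p4 (D : R -> R -> R)
  (hD0 : forall x y, (x, y) <> (0, 0) -> 0 <= D x y)
  (hDb : exists B, forall x y, (x, y) <> (0, 0) -> Rabs (D x y) <= B)
  (hDC1 : C1_punctured D)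
  (T rA rB : R) (hT : 0 < T) (hrA : 0 < rA) (hrB : 0 < rB)
  (x1 x2 v1 v2 : nat -> R -> R)
  (hsol : forall n, is_solution D T (x1 n) (x2 n) (v1 n) (v2 n))
  (hA : forall n, norm2 (x1 n (-T)) (x2 n (-T)) = rA)
  (hB : forall n, norm2 (x1 n 0) (x2 n 0) = rB)
  (hrdot : exists M, forall n, exists d,
      deriv_within (-T) 0 (fun t => norm2 (x1 n t) (x2 n t)) d 0 /\
      Rabs d <= M) :
  exists M, forall n, Rabs (x1 n 0 * v2 n 0 - x2 n 0 * v1 n 0) <= M.
Proof.
  destruct hDb as [B0 HB0]. destruct hrdot as [M0 HM0].
  set (B := Rabs B0). set (m := rB * Rabs M0).
  assert (hB' : 0 <= B) by apply Rabs_pos.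
  assert (hm : 0 <= m) by (unfold m; apply Rmult_le_pos; [lra|apply Rabs_pos]).
  exists (rB ^ 2 * (B * m + (rA ^ 2 + 2 * m * T) / T ^ 2 + 2 / rB) + 1).
  intros n. destruct (HM0 n) as [d [hd hdM]].
  assert (hc := per_n D B m T rA rB (x1 n) (x2 n) (v1 n) (v2 n) d hT hB' hm hrB).
  assert (hc2 : (x1 n 0 * v2 n 0 - x2 n 0 * v1 n 0) ^ 2 <=
     rB ^ 2 * (B * m + (rA ^ 2 + 2 * m * T) / T ^ 2 + 2 / rB)).
  { apply hc; auto.
    - intros x y hxy. split. apply hD0; auto.
      specialize (HB0 x y hxy). assert (h1 := Rle_abs (D x y)). assert (h2 := Rle_abs B0).
      unfold B; lra.
    - unfold m. apply Rmult_le_compat_l; [lra|].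
      assert (h1 := Rle_abs d). assert (h2 := Rle_abs M0). lra. }
  set (c := x1 n 0 * v2 n 0 - x2 n 0 * v1 n 0) in *.
  assert (Rabs c <= c ^ 2 + 1); [|lra].
  rewrite <- pow2_abs. assert (h := Rabs_pos c). simpl. nra.
Qed.
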